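(* Let $k$ be a perfect field of characteristic $p>0$, $S=k[x_1,\dots,x_n]$, $I\subseteq S$ a squarefree monomial ideal and $R=S/I$ the Stanley-Reisner ring. Then the $R$-Cartier algebra $\mathcal{C}(R)$ is gauge bounded.
   Context: For $e\ge0$, $F^e_*R$ is $R$ with $R$-structure $r\cdot m=r^{p^e}m$; $\mathcal{C}_e(R)=\mathrm{Hom}_R(F^e_*R,R)$ is the set of $p^{-e}$-linear maps $\psi:R\to R$ (additive with $\psi(r^{p^e}m)=r\psi(m)$), and $\mathcal{C}(R)=\bigoplus_{e\ge0}\mathcal{C}_e(R)$ is the graded ring with multiplication by composition ($\mathcal{C}_0(R)=R$); $\mathcal{C}_+(R)=\bigoplus_{e\ge1}\mathcal{C}_e(R)$, a right $R$-module. Gauge: for $\alpha\in\mathbb{N}_0^n$ let $\|\alpha\|=\max_j\alpha_j$; let $S_d$ be the $k$-span of monomials ${\bf x}^\alpha$ with $\|\alpha\|\le d$. For a finitely generated $S$-module $M$ with generators $m_1,\dots,m_k$, set $M_d=S_d\cdot\langle m_1,\dots,m_k\rangle$ and $\delta(m)=d$ if $m\in M_d\setminus M_{d-1}$, $\delta(0)=-\infty$; the standard gauge on $R$ is the one induced by the generator $1_R$. $\mathcal{C}(R)$ is gauge bounded if for some (equivalently each) gauge $\delta$ on $R$ there is a family $\{\psi_i\in\mathcal{C}_{e_i}(R)\}$ generating $\mathcal{C}_+(R)$ as a right $R$-module and a constant $K$ with $\delta(\psi_i(r))\le \delta(r)/p^{e_i}+K/(p-1)$ for all $i$ and all $r\in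 R$. *)

(* Defs.v *)
From HB Require Import structures.
From mathcomp Require Import all_boot all_algebra.
From mathcomp Require Import finmap mpoly.
Set Implicit Arguments.
Unset Strict Implicit.
Unset Printing Implicit Defensive.
Import GRing.Theory.
Local Open Scope ring_scope.

(* The ring R = S/I is handled through
   representatives in S: an element of R is represented by any f : S,
   and two representatives f, g give the same element of R iff I (f - g). *)

Section StanleyReisner.
Variables (k : fieldType) (n : nat).
Local Notation S := {mpoly k[n]}.

Definition squarefree_monom (m : 'X_{1..n}) : bool := [forall i, (m i <= 1)%N].

Definition monomial_ideal (gens : seq 'X_{1..n}) (f : S) : Prop :=
  exists c : 'X_{1..n} -> S, f = \sum_(m <- gens) c m * 'X_[m].

Definition in_Sd (d : nat) (g : S) : Prop :=
  forall m, m \in msupp g -> forall j, (m j <= d)%N.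

(* M_d = S_d . 1_R  (standard gauge on R = S/I, generator 1_R):
   the class of f lies in M_d *)
Definition in_Md (I : S -> Prop) (d : nat) (f : S) : Prop :=
  exists g, in_Sd d g /\ I (f - g).

(* delta_le I f x  <->  delta(f mod I) <= x  for the standard gauge delta,
   where delta(0) = -oo and otherwise delta(f) = min { d | f in M_d }. *)
Definition delta_le (I : S -> Prop) (f : S) (x : rat) : Prop :=
  I f \/ exists d : nat, (d%:R <= x) /\ in_Md I d f.

(* psi : S -> S represents (a lift of) an element of C_e(R) =
   Hom_R(F^e_* R, R), i.e. a well-defined map R -> R which is additive
   and satisfies psi(r^(p^e) m) = r psi(m). *)
Definition cartier_map (I : S -> Prop) (p e : nat) (psi : S -> S) : Prop :=
  [/\ forall f g, I (f - g) -> I (psi f - psi g),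
      forall f g, I (psi (f + g) - (psi f + psi g)) &
      forall r m, I (psi (r ^+ (p ^ e) * m) - r * psi m)].

(* the family {psi_i in C_{e_i}(R)} generates C_+(R) = (+)_{e>=1} C_e(R) as
   a right R-module (right action (psi . r)(m) = psi(r m)).  Since C(R) is
   graded and the psi_i are homogeneous, this means: every homogeneous
   phi in C_e(R), e >= 1, is a finite sum  sum_j psi_{i_j} . r_j  with
   e_{i_j} = e. *)
Definition generates_Cplus (I : S -> Prop) (p : nat) (Idx : Type)
    (e : Idx -> nat) (psi : Idx -> S -> S) : Prop :=
  forall (e0 : nat) (phi : S -> S), (0 < e0)%N -> cartier_map I p e0 phi ->
    exists l : seq (Idx * S),
      all (fun ir => e ir.1 == e0) l /\
      forall m, I (phi m - \sum_(ir <- l) psi ir.1 (ir.2 * m)).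

Definition gauge_bounded (I : S -> Prop) (p : nat) : Prop :=
  exists (Idx : Type) (e : Idx -> nat) (psi : Idx -> S -> S) (K : rat),
    [/\ forall i, (0 < e i)%N /\ cartier_map I p (e i) (psi i),
        generates_Cplus I p e psi &
        forall i (r : S) (d : nat), in_Md I d r ->
          delta_le I (psi i r)
            ((d%:R : rat) / (p ^ e i)%:R + K / (p.-1)%:R)].

End StanleyReisner.

(* Main.v *)
Require Import Defs.
From HB Require Import structures.
From mathcomp Require Import all_boot all_algebra.
From mathcomp Require Import finmap mpoly zify ring.
From Stdlib Require Import ClassicalEpsilon.
Import GRing.Theory Num.Theory.
Local Open Scope ring_scope.

Lemma frobD (R : comNzRingType) p (hp : p \in [pchar R]) e (x y : R) :
  (x + y) ^+ (p ^ e) = x ^+ (p ^ e) + y ^+ (p ^ e).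
Proof.
elim: e => [|e IH]; first by rewrite !expn0 !expr1.
rewrite !expnSr !exprM IH.
by rewrite -!(pFrobenius_autE hp) rmorphD.
Qed.

Section Main.
Variables (k : fieldType) (n p : nat).
Hypothesis pchar_p : p \in [pchar k].
Hypothesis perf : forall x : k, exists y : k, y ^+ p = x.
Local Notation S := {mpoly k[n]}.

Lemma p_prime : prime p. Proof. exact: pcharf_prime pchar_p. Qed.
Lemma p_gt0 : (0 < p)%N. Proof. exact: prime_gt0 p_prime. Qed.
Lemma q_gt0 e : (0 < p ^ e)%N. Proof. by rewrite expn_gt0 p_gt0. Qed.

Lemma pcharS : p \in [pchar S]. Proof. by rewrite pchar_lalg. Qed.

Lemma frobq_inj e (x y : k) : x ^+ (p ^ e) = y ^+ (p ^ e) -> x = y.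
Proof.
elim: e x y => [|e IH] x y; first by rewrite !expn0 !expr1.
rewrite expnS !exprM => /IH.
rewrite -!(pFrobenius_autE pchar_p); exact: fmorph_inj.
Qed.

Lemma perf' (x : k) : exists y, y ^+ p == x.
Proof. by have [y hy] := perf x; exists y; rewrite hy. Qed.

Definition rt1 (x : k) : k := xchoose (perf' x).
Definition rtq e (x : k) : k := iter e rt1 x.

Lemma rtqK e x : rtq e x ^+ (p ^ e) = x.
Proof.
elim: e x => [|e IH] x; first by rewrite expn0 expr1.
rewrite /rtq iterS -/(rtq e x) expnS exprM.
by rewrite /rt1 (eqP (xchooseP (perf' _))) IH.
Qed.

Lemma rtq_char e x y : y ^+ (p ^ e) = x -> rtq e x = y.
Proof. by move=> h; apply: (@frobq_inj e); rewrite rtqK. Qed.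

Lemma rtq0 e : rtq e 0 = 0.
Proof. by apply: rtq_char; rewrite expr0n eqn0Ngt q_gt0. Qed.

Lemma rtqD e x y : rtq e (x + y) = rtq e x + rtq e y.
Proof. by apply: rtq_char; rewrite (@frobD _ _ pchar_p) !rtqK. Qed.

Lemma rtqN e x : rtq e (- x) = - rtq e x.
Proof. by apply/eqP; rewrite -addr_eq0 -rtqD addrC subrr rtq0. Qed.

Lemma rtqB e x y : rtq e (x - y) = rtq e x - rtq e y.
Proof. by rewrite rtqD rtqN. Qed.

Lemma rtqM e c x : rtq e (c ^+ (p ^ e) * x) = c * rtq e x.
Proof. by apply: rtq_char; rewrite exprMn rtqK. Qed.

Lemma rtqZ e c : rtq e (c ^+ (p ^ e)) = c.
Proof. by apply: rtq_char. Qed.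


Definition Phi e (a : 'X_{1..n}) (f : S) : S :=
  \sum_(w : 'X_{1..n < msize f}) rtq e (f@_((w *+ p ^ e) + a)%MM) *: 'X_[w].

Lemma coefPhi e a f w : (Phi e a f)@_w = rtq e (f@_((w *+ p ^ e) + a)%MM).
Proof.
rewrite /Phi.
case: (ltnP (mdeg w) (msize f)) => h.
  exact: (mcoeff_mpoly (fun w0 : 'X_{1..n} => rtq e (f@_((w0 *+ p ^ e) + a)%MM))).

rewrite raddf_sum big1 /=.
  rewrite memN_msupp_eq0 ?rtq0 //; apply/negP => /msize_mdeg_lt.
  rewrite mdegD mdegMn => h2.
  have := q_gt0 e; move: h h2; set q := (p ^ e)%N; set D := mdeg w.
  move=> h h2 hq; nia.
move=> [w' hw'] _; rewrite mcoeffZ mcoeffX.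
suff -> : (w' == w) = false by rewrite mulr0.
apply/negbTE/eqP => ew; move: hw'; rewrite /= ew => h2.
by move: (leq_trans h2 h); rewrite ltnn.
Qed.

Lemma PhiD e a f g : Phi e a (f + g) = Phi e a f + Phi e a g.
Proof. by apply/mpolyP => w; rewrite mcoeffD !coefPhi mcoeffD rtqD. Qed.

Lemma PhiB e a f g : Phi e a (f - g) = Phi e a f - Phi e a g.
Proof. by apply/mpolyP => w; rewrite mcoeffB !coefPhi mcoeffB rtqB. Qed.

Lemma Phi0 e a : Phi e a 0 = 0.
Proof. by apply/mpolyP => w; rewrite mcoeff0 !coefPhi mcoeff0 rtq0. Qed.


Lemma mcoeffXM v (f : S) u :
  ('X_[v] * f)@_u = if (v <= u)%MM then f@_(u - v)%MM else 0.
Proof.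
case: ifP => h.
  rewrite -commr_mpolyX -{1}(submK h) addmC; exact: mcoeffMX.
apply: memN_msupp_eq0; apply/negP; rewrite -commr_mpolyX.
rewrite (perm_mem (msuppMX _ _)) => /mapP [m' _ em].
by move: h; rewrite em lem_addr.
Qed.

Lemma Phi_frobX e (a : 'X_{1..n}) (c : k) (u : 'X_{1..n}) (m : S) : (forall i, a i < p ^ e)%N ->
  Phi e a (((c *: 'X_[u]) ^+ (p ^ e)) * m) = (c *: 'X_[u]) * Phi e a m.
Proof.
move=> ha; apply/mpolyP => w.
rewrite exprZn mpolyXn -!scalerAl !mcoeffZ coefPhi mcoeffZ !mcoeffXM coefPhi.
have -> : (u *+ p ^ e <= w *+ p ^ e + a)%MM = (u <= w)%MM.
  apply/mnm_lepP/mnm_lepP => H i; have := H i; have := ha i;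
    rewrite ?mnmDE ?mulmnE; move: (p ^ e)%N => q; nia.
case: ifP => h; last by rewrite rtqM rtq0.
rewrite rtqM; congr (_ * rtq e (m@_ _)).
apply/mnmP => i; move/mnm_lepP: h => /(_ i) h.
rewrite !mnmBE !mnmDE !mulmnE mnmBE; move: (p ^ e)%N => q; nia.
Qed.

Lemma Phi_frob e (a : 'X_{1..n}) (r m : S) : (forall i, a i < p ^ e)%N ->
  Phi e a ((r ^+ (p ^ e)) * m) = r * Phi e a m.
Proof.
move=> ha; elim/mpolyind: r => [|c u r _ _ IH].
  by rewrite expr0n eqn0Ngt q_gt0 /= !mul0r Phi0.
by rewrite (@frobD _ _ pcharS) !mulrDl PhiD IH Phi_frobX.
Qed.


Lemma coefPhiX e a c u w : (Phi e a (c *: 'X_[u]))@_w =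
  if u == (w *+ p ^ e + a)%MM then rtq e c else 0.
Proof.
rewrite coefPhi mcoeffZ mcoeffX eq_sym.
by case: eqP => _; rewrite ?mulr1 ?mulr0 ?rtq0.
Qed.

Definition mk e (f : {ffun 'I_n -> 'I_(p ^ e)}) : 'X_{1..n} :=
  [multinom (f i : nat) | i < n].
Arguments mk {e} f.
Definition dq e (u : 'X_{1..n}) : 'X_{1..n} := [multinom (u i %/ p ^ e)%N | i < n].
Definition rf e (u : 'X_{1..n}) : {ffun 'I_n -> 'I_(p ^ e)} :=
  [ffun i => Ordinal (ltn_pmod (u i) (q_gt0 e))].

Lemma mk_lt e (f : {ffun 'I_n -> 'I_(p ^ e)}) i : (mk f i < p ^ e)%N.
Proof. by rewrite /mk mnmE. Qed.

Lemma udecomp e u : u = (dq e u *+ p ^ e + mk (rf e u))%MM.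
Proof.
apply/mnmP => i; rewrite mnmDE mulmnE /mk /dq !mnmE ffunE /=.
exact: divn_eq.
Qed.

Lemma udecompE e u w (f : {ffun 'I_n -> 'I_(p ^ e)}) :
  (u == (w *+ p ^ e + mk f)%MM) = (w == dq e u) && (f == rf e u).
Proof.
apply/eqP/andP => [eu|[/eqP -> /eqP ->]]; last exact: udecomp.
have hi i : u i = (w i * p ^ e + f i)%N by rewrite eu mnmDE mulmnE /mk mnmE.
split; apply/eqP.
  apply/mnmP => i; rewrite /dq mnmE hi divnMDl ?q_gt0 // divn_small ?addn0 //.
apply/ffunP => i; apply/val_inj; rewrite ffunE /= hi modnMDl modn_small //.
Qed.

Lemma PhiX_other e (f : {ffun 'I_n -> 'I_(p ^ e)}) c u :
  f != rf e u -> Phi e (mk f) (c *: 'X_[u]) = 0.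
Proof.
move=> hf; apply/mpolyP => w; rewrite coefPhiX mcoeff0 udecompE.
by rewrite (negbTE hf) andbF.
Qed.

Lemma PhiX_main e c u :
  Phi e (mk (rf e u)) (c *: 'X_[u]) = rtq e c *: 'X_[dq e u].
Proof.
apply/mpolyP => w; rewrite coefPhiX udecompE eqxx andbT mcoeffZ mcoeffX eq_sym.
by case: eqP => _; rewrite ?mulr1 ?mulr0.
Qed.

Lemma decomp e m : m = \sum_(f : {ffun 'I_n -> 'I_(p ^ e)})
   (Phi e (mk f) m) ^+ (p ^ e) * 'X_[mk f].
Proof.
elim/mpolyind: m => [|c u m _ _ IH].
  by rewrite big1 // => f _; rewrite Phi0 expr0n eqn0Ngt q_gt0 mul0r.
under eq_bigr => f _ do rewrite PhiD (@frobD _ _ pcharS) mulrDl.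
rewrite big_split /= -IH; congr (_ + _).
rewrite (bigD1 (rf e u)) //= big1 ?addr0; last first.
  by move=> f hf; rewrite PhiX_other // expr0n eqn0Ngt q_gt0 mul0r.
rewrite PhiX_main exprZn rtqK mpolyXn -scalerAl -mpolyXD -udecomp //.
Qed.


Variable gens : seq 'X_{1..n}.

Definition good (u : 'X_{1..n}) : bool :=
  has (fun g => ((count_mem g gens)%:R != 0 :> k) && (g <= u)%MM) gens.
Definition Ig (f : S) : Prop := forall u, u \in msupp f -> good u.

Lemma good_mono u u' : good u -> (u <= u')%MM -> good u'.
Proof.
move=> /hasP [g hg /andP [h1 h2]] hu; apply/hasP; exists g => //.
by rewrite h1 /=; move: h2 hu; apply: lepm_trans.
Qed.

Lemma Ig0 : Ig 0.
Proof. by move=> u; rewrite mcoeff_msupp mcoeff0 eqxx. Qed.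

Lemma IgD f g : Ig f -> Ig g -> Ig (f + g).
Proof.
move=> hf hg u /msuppD_le; rewrite mem_cat => /orP [] h; [exact: hf | exact: hg].
Qed.

Lemma IgN f : Ig f -> Ig (- f).
Proof. by move=> hf u; rewrite (perm_mem (msuppN _)); apply: hf. Qed.

Lemma IgB f g : Ig f -> Ig g -> Ig (f - g).
Proof. by move=> hf hg; apply: IgD => //; apply: IgN. Qed.

Lemma IgM r f : Ig f -> Ig (r * f).
Proof.
move=> hf u /msuppM_le /allpairsP [[m1 m2] /= [_ h2 ->]].
exact: (good_mono _ _ (hf _ h2) (lem_addl m1 m2)).
Qed.

Lemma IgZ c f : Ig f -> Ig (c *: f).
Proof. by move=> hf u /msuppZ_le; apply: hf. Qed.

Lemma Ig_sum (I : Type) (s : seq I) (P : pred I) (F : I -> S) :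
  (forall i, P i -> Ig (F i)) -> Ig (\sum_(i <- s | P i) F i).
Proof. by move=> h; apply: big_ind => //; [exact: Ig0 | exact: IgD]. Qed.

Lemma IgBl f g : Ig (f - g) -> Ig g -> Ig f.
Proof. by move=> h1 h2; rewrite -(subrK g f); apply: IgD. Qed.

Lemma Ichar f : monomial_ideal gens f <-> Ig f.
Proof.
split.
  move=> [c ->] u; rewrite mcoeff_msupp; apply: contraNT => hu.
  rewrite raddf_sum /= -big_undup_iterop_count; apply/eqP.
  rewrite big1_seq // => m /andP [_ hm].
  rewrite Monoid.iteropE iter_addr_0 -mulr_natr.
  case: (boolP ((count_mem m gens)%:R == 0 :> k)) => [/eqP -> | hc]; first by rewrite mulr0.
  rewrite commr_mpolyX mcoeffXM; case: ifP => hmu; last by rewrite mul0r.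
  case/negP: hu; apply/hasP; exists m; first by rewrite -mem_undup.
  by rewrite hc hmu.
move=> hI; rewrite [f]mpolyE.
have hsum : forall (s : seq 'X_{1..n}) (F : 'X_{1..n} -> S),
    (forall u, u \in s -> monomial_ideal gens (F u)) ->
    monomial_ideal gens (\sum_(u <- s) F u).
  move=> s F; elim: s => [|u s IH] h; first by exists (fun _ => 0); rewrite big_nil big1 // => m _; rewrite mul0r.
  rewrite big_cons; have [c1 e1] := h u (mem_head _ _).
  have [c2 e2] := IH (fun v hv => h v (mem_behead (s:=u :: s) hv)).
  exists (fun m => c1 m + c2 m); rewrite e1 e2 -big_split /=.
  by apply: eq_bigr => m _; rewrite mulrDl.
apply: hsum => u hu; have /hasP [g hg /andP [hc hgu]] := hI u hu.
set N := (count_mem g gens)%:R : k.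
exists (fun m => (m == g)%:R * (N^-1 *: (f@_u *: 'X_[(u - g)%MM]))).
rewrite (eq_bigr (fun m => if m == g then N^-1 *: (f@_u *: 'X_[(u - g)%MM]) * 'X_[g] else 0)); last first.
  by move=> m _; case: eqP => [->|_]; rewrite ?mul1r ?mul0r.
rewrite -big_mkcond /= (eq_bigl (pred1 g)) // big_const_seq /=.
rewrite iter_addr_0 -scaler_nat -scalerAl scalerA -/N mulfV // scale1r.
by rewrite -scalerAl -mpolyXD submK.
Qed.


Definition tr (v : 'X_{1..n}) : 'X_{1..n} := [multinom minn (v i) 1 | i < n].

Lemma good_tr v w : all (@squarefree_monom n) gens ->
  good (v + w)%MM = good (tr v + w)%MM.
Proof.
move=> /allP sq; apply: eq_in_has => g /sq /forallP hg /=; congr (_ && _).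
apply/mnm_lepP/mnm_lepP => H i; have := H i; have := hg i;
  rewrite !mnmDE /tr mnmE; lia.
Qed.

Lemma IgX u : good u -> Ig 'X_[u].
Proof. by move=> h v; rewrite msuppX mem_seq1 => /eqP ->. Qed.

Section Phi_props.
Variables (e : nat) (phi : S -> S).
Hypothesis H1 : forall f g, Ig (f - g) -> Ig (phi f - phi g).
Hypothesis H2 : forall f g, Ig (phi (f + g) - (phi f + phi g)).
Hypothesis H3 : forall r m, Ig (phi (r ^+ (p ^ e) * m) - r * phi m).

Lemma phi0 : Ig (phi 0).
Proof.
have := H2 0 0; rewrite addr0 opprD addrA subrr add0r => /IgN; by rewrite opprK.
Qed.

Lemma phi_sum (I : Type) (s : seq I) (F : I -> S) :
  Ig (phi (\sum_(i <- s) F i) - \sum_(i <- s) phi (F i)).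
Proof.
elim: s => [|a s IH]; first by rewrite !big_nil subr0; exact: phi0.
rewrite !big_cons.
have -> : phi (F a + \sum_(i <- s) F i) - (phi (F a) + \sum_(i <- s) phi (F i)) =
  (phi (F a + \sum_(i <- s) F i) - (phi (F a) + phi (\sum_(i <- s) F i))) +
  (phi (\sum_(i <- s) F i) - \sum_(i <- s) phi (F i)).
  by ring.
exact: IgD.
Qed.

Definition Psi (m : S) : S :=
  \sum_(f : {ffun 'I_n -> 'I_(p ^ e)}) phi 'X_[mk f] * Phi e (mk f) m.

Lemma phi_Psi m : Ig (phi m - Psi m).
Proof.
rewrite {1}(decomp e m).
set D := \sum_(f : _) _.
have -> : phi D - Psi m = (phi D - \sum_(f : {ffun 'I_n -> 'I_(p ^ e)})
    phi ((Phi e (mk f) m) ^+ (p ^ e) * 'X_[mk f])) +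
   (\sum_(f : {ffun 'I_n -> 'I_(p ^ e)}) phi ((Phi e (mk f) m) ^+ (p ^ e) * 'X_[mk f]) - Psi m).
  by rewrite addrA addrNK.
apply: IgD; first exact: phi_sum.
rewrite /Psi -sumrB; apply: Ig_sum => f _; rewrite [phi 'X_[_] * _]mulrC; exact: H3.
Qed.

Lemma rtq1 : rtq e 1 = 1.
Proof. by apply: rtq_char; rewrite expr1n. Qed.

Lemma PsiX u : Psi 'X_[u] = phi 'X_[mk (rf e u)] * 'X_[dq e u].
Proof.
rewrite /Psi (bigD1 (rf e u)) //= big1 ?addr0.
  by rewrite -[X in Phi _ _ X]scale1r PhiX_main rtq1 scale1r.
by move=> f hf; rewrite -[X in Phi _ _ X]scale1r PhiX_other // mulr0.
Qed.

Lemma torus (f : {ffun 'I_n -> 'I_(p ^ e)}) v w :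
  v \in msupp (phi 'X_[mk f]) -> good (w *+ p ^ e + mk f)%MM -> good (v + w)%MM.
Proof.
move=> hv hg; set u' := (w *+ p ^ e + mk f)%MM.
have hX : Ig (phi 'X_[u']).
  apply: (IgBl _ (phi 0)); last exact: phi0.
  by apply: H1; rewrite subr0; apply: IgX.
have hP : Ig (Psi 'X_[u']).
  have -> : Psi 'X_[u'] = phi 'X_[u'] - (phi 'X_[u'] - Psi 'X_[u']) by ring.
  by apply: IgB => //; apply: phi_Psi.
move: hP; rewrite PsiX.
have /andP [/eqP <- /eqP <-] : (w == dq e u') && (f == rf e u') by rewrite -udecompE.
move=> hP; rewrite addmC; apply: hP.
by rewrite (perm_mem (msuppMX _ _)); apply/mapP; exists v.
Qed.

Lemma pres (f : {ffun 'I_n -> 'I_(p ^ e)}) v :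
  all (@squarefree_monom n) gens ->
  v \in msupp (phi 'X_[mk f]) ->
  forall g, Ig g -> Ig ('X_[tr v] * Phi e (mk f) g).
Proof.
move=> sq hv g hg u; rewrite -commr_mpolyX (perm_mem (msuppMX _ _)).
case/mapP => w hw ->; rewrite -good_tr //.
apply: (torus _ _ _ hv); apply: hg.
move: hw; rewrite !mcoeff_msupp coefPhi; apply: contra => /eqP ->.
by rewrite rtq0.
Qed.

End Phi_props.


Definition Idx := (nat * 'X_{1..n} * 'X_{1..n})%type.
Definition eI (i : Idx) : nat := i.1.1.+1.
Definition Pres (i : Idx) : Prop :=
  [/\ forall j, (i.1.2 j < p ^ eI i)%N, forall j, (i.2 j <= 1)%N &
      forall g, Ig g -> Ig ('X_[i.2] * Phi (eI i) i.1.2 g)].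
Definition psiI (i : Idx) : S -> S :=
  if excluded_middle_informative (Pres i)
  then (fun g => 'X_[i.2] * Phi (eI i) i.1.2 g) else (fun _ => 0).

Lemma tr_le v : (tr v <= v)%MM.
Proof. by apply/mnm_lepP => i; rewrite /tr mnmE geq_minl. Qed.

Lemma main_gb : all (@squarefree_monom n) gens ->
  gauge_bounded (@monomial_ideal k n gens) p.
Proof.
move=> sq; exists Idx, eI, psiI, (p.-1)%:R; split.
- move=> i; split => //; rewrite /psiI.
  destruct (excluded_middle_informative (Pres i)) as [[ha hv hpres]|hn];
    split => [f g /Ichar h|f g|r m]; apply/Ichar; rewrite /=.
  + by rewrite -mulrBr -PhiB; apply: hpres.
  + by rewrite PhiD mulrDr subrr; exact: Ig0.
  + by rewrite Phi_frob // mulrCA subrr; exact: Ig0.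
  + by rewrite subrr; exact: Ig0.
  + by rewrite addr0 subrr; exact: Ig0.
  + by rewrite mulr0 subrr; exact: Ig0.
- move=> e0 phi; case: e0 => // e' _ [C1 C2 C3].
  have H1 : forall f g, Ig (f - g) -> Ig (phi f - phi g).
    by move=> f g /Ichar h; apply/Ichar; apply: C1.
  have H2 : forall f g, Ig (phi (f + g) - (phi f + phi g)).
    by move=> f g; apply/Ichar; apply: C2.
  have H3 : forall r m, Ig (phi (r ^+ (p ^ e'.+1) * m) - r * phi m).
    by move=> r m; apply/Ichar; apply: C3.
  exists (flatten [seq [seq ((e', mk f, tr v),
      ((phi 'X_[mk f])@_v *: 'X_[(v - tr v)%MM]) ^+ (p ^ e'.+1))
        | v <- msupp (phi 'X_[mk f])]
        | f <- index_enum {ffun 'I_n -> 'I_(p ^ e'.+1)}]); split.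
    by apply/allP => ir /flattenP [s /mapP [f _ ->] /mapP [v _ ->]].
  move=> m; apply/Ichar.
  set l := flatten _.
  have -> : \sum_(ir <- l) psiI ir.1 (ir.2 * m) = Psi e'.+1 phi m.
    rewrite /l big_flatten big_map /Psi; apply: eq_bigr => f _.
    rewrite big_map [in RHS](mpolyE (phi 'X_[mk f])) mulr_suml.
    apply: eq_big_seq => v hv /=.
    rewrite /psiI; destruct (excluded_middle_informative _) as [hp|hn]; last first.
      exfalso; apply: hn; split => /=.
      * exact: mk_lt.
      * by move=> j; rewrite /tr mnmE geq_minr.
      * exact: (pres _ _ H1 H2 H3 _ _ sq hv).
    rewrite /eI /= Phi_frob; last exact: mk_lt.
    rewrite mulrA; congr (_ * _).
    by rewrite -scalerAr -mpolyXD addmC submK // tr_le.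
  exact: phi_Psi.
- move=> i r d [g0 [hS hI]]; rewrite /psiI.
  destruct (excluded_middle_informative (Pres i)) as [hp|hn]; last first.
    by left; apply/Ichar; exact: Ig0.
  have [ha hv hpres] := hp; rewrite /=.
  right; exists (d %/ p ^ eI i).+1; split.
    have hp1 : (p.-1)%:R != 0 :> rat.
      by rewrite pnatr_eq0 -lt0n; have := prime_gt1 p_prime; lia.
    rewrite divff // -addn1 natrD lerD2r.
    rewrite ler_pdivlMr ?ltr0n ?q_gt0 // -natrM ler_nat leq_trunc_div //.
  exists ('X_[i.2] * Phi (eI i) i.1.2 g0); split.
    move=> u; rewrite -commr_mpolyX (perm_mem (msuppMX _ _)).
    case/mapP => w hw -> j.
    have : (w *+ p ^ eI i + i.1.2)%MM \in msupp g0.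
      move: hw; rewrite !mcoeff_msupp coefPhi; apply: contra => /eqP ->.
      by rewrite rtq0.
    move/hS => /(_ j); rewrite !mnmDE mulmnE => hd.
    have := hv j; have := q_gt0 (eI i).
    move=> _ h1; have : (w j <= d %/ p ^ eI i)%N.
      by rewrite leq_divRL ?q_gt0 //; exact: leq_trans (leq_addr _ _) hd.
    lia.
  apply/Ichar; rewrite -mulrBr -PhiB; apply: hpres; exact/Ichar.
Qed.

End Main.

Theorem proposition5p3 (k : fieldType) (p n : nat) (gens : seq 'X_{1..n}) :
  p \in [pchar k] ->
  (forall x : k, exists y : k, y ^+ p = x) ->
  all (@squarefree_monom n) gens ->
  gauge_bounded (@monomial_ideal k n gens) p.
Proof. by move=> hp hperf hsq; apply: (@main_gb k n p hp hperf gens hsq). Qed.
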